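(* Let $\ket\psi$ be a pure $n$-qubit state, and let $p_1$ be the output distribution of the $1$-copy hidden cut circuit on $\ket\psi$. Let $H=\{\bm s\in\{0,1\}^n : P(\bm s)=1\}$. Then: (i) $H$ is a subgroup of $(\{0,1\}^n,\oplus)$ containing $\bm 0$ and $\bm 1$; (ii) for $\bm s\in\{0,1\}^n$ the following are equivalent: (a) $\bm s\in H$; (b) $P(\bm s'\oplus\bm s)=P(\bm s')$ for all $\bm s'\in\{0,1\}^n$; (c) $\bm s\cdot\bm x=0$ for every $\bm x$ with $p_1(\bm x)>0$.
   Context: Subsystems are bitstrings $\bm s\in\{0,1\}^n$ (qubit $j$ included iff $s_j=1$), $\bm 0,\bm 1$ are the all-zeros and all-ones strings, $\oplus$ is bitwise addition mod 2 and $\bm x\cdot\bm s$ the dot product mod 2. $\rho_{\bm s}=\mathrm{Tr}_{\bar{\bm s}}\ket\psi\bra\psi$ and $P(\bm s)=\mathrm{Tr}(\rho_{\bm s}^2)$ (with $P(\bm 0)=1$). $\mathrm{SWAP}_{\bm s}$ swaps the qubits of subsystem $\bm s$ between two copies of the $n$-qubit space. The $t$-copy hidden cut circuit: an $n$-qubit group register is initialized to $\ket{0^n}$ and a state register to $(\ket\psi\ket\psi)^{\otimes t}$; apply $H^{\otimes n}$ to the group register; apply $\sum_{\bm s}\ket{\bm s}\bra{\bm s}\otimes \mathrm{SWAP}_{\bm s}^{\otimes t}$; apply $H^{\otimes n}$ to the group register; measure the group register in the computational basis; $p_t$ denotes the resulting distribution. *)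

(* Defs.v *)
From HB Require Import structures.
From mathcomp Require Import all_boot all_order all_algebra.
Set Implicit Arguments. Unset Strict Implicit. Unset Printing Implicit Defensive.
Import Order.TTheory GRing.Theory Num.Theory.
Local Open Scope ring_scope.

(* bitstrings s in {0,1}^n ; qubit j is in s iff s j = true *)
Definition bits (n : nat) := {ffun 'I_n -> bool}.

Definition bzero n : bits n := [ffun _ => false].
Definition bone n : bits n := [ffun _ => true].
Definition bxor n (s t : bits n) : bits n := [ffun j => s j (+) t j].
Definition bcomp n (s : bits n) : bits n := [ffun j => ~~ s j].
Definition bdot n (x s : bits n) : bool := \big[addb/false]_(j < n) (x j && s j).

(* x is supported inside subsystem s (encodes a basis state of subsystem s) *)
Definition supp_in n (s x : bits n) : bool := [forall j, x j ==> s j].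

Section Quantum.
Variable C : numClosedFieldType.
Variable n : nat.

Definition is_pure_state (psi : {ffun bits n -> C}) : Prop :=
  \sum_(x : bits n) `|psi x| ^+ 2 = 1.

(* reduced density matrix rho_s = Tr_{comp s} |psi><psi|, indexed by basis
   states a, a' of subsystem s (bitstrings supported in s); a basis state of
   the whole system is a (+) b with b supported in the complement. *)
Definition rho (psi : {ffun bits n -> C}) (s a a' : bits n) : C :=
  \sum_(b : bits n | supp_in (bcomp s) b) psi (bxor a b) * (psi (bxor a' b))^*.

Definition purity (psi : {ffun bits n -> C}) (s : bits n) : C :=
  \sum_(a : bits n | supp_in s a) \sum_(a' : bits n | supp_in s a')
     rho psi s a a' * rho psi s a' a.

(* states of (group register) x (copy 1) x (copy 2) *)
Definition gstate := bits n -> bits n -> bits n -> C.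

Definition init_state (psi : {ffun bits n -> C}) : gstate :=
  fun g u v => (g == bzero n)%:R * psi u * psi v.

Definition hadamard_n (f : gstate) : gstate :=
  fun g u v => (sqrtC (2 ^ n)%:R)^-1 *
     \sum_(h : bits n) (-1) ^+ bdot g h * f h u v.

Definition swap_sub (s u v : bits n) : bits n * bits n :=
  ([ffun j => if s j then v j else u j], [ffun j => if s j then u j else v j]).

Definition ctrl_swap (f : gstate) : gstate :=
  fun g u v => f g (swap_sub g u v).1 (swap_sub g u v).2.

Definition hc_final (psi : {ffun bits n -> C}) : gstate :=
  hadamard_n (ctrl_swap (hadamard_n (init_state psi))).

Definition p1 (psi : {ffun bits n -> C}) (x : bits n) : C :=
  \sum_(u : bits n) \sum_(v : bits n) `|hc_final psi x u v| ^+ 2.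

Definition Hgroup (psi : {ffun bits n -> C}) : {set bits n} :=
  [set s | purity psi s == 1].

End Quantum.

(* Main.v *)
Require Import Defs.
From HB Require Import structures.
From mathcomp Require Import all_boot all_order all_algebra.
From mathcomp Require Import ring.
Import Order.TTheory GRing.Theory Num.Theory.
Local Open Scope ring_scope.

Lemma bdot_xorl n (x y t : bits n) : bdot (bxor x y) t = bdot x t (+) bdot y t.
Proof.
rewrite /bdot -big_split /=; apply: eq_bigr => j _; rewrite ffunE.
by case: (x j) (y j) (t j) => [] [] [].
Qed.

Lemma bdotC n (x t : bits n) : bdot x t = bdot t x.
Proof. by apply: eq_bigr => j _; rewrite andbC. Qed.

Lemma bdot_xorr n (x y t : bits n) : bdot t (bxor x y) = bdot t x (+) bdot t y.
Proof. by rewrite bdotC bdot_xorl !(bdotC _ t). Qed.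

Lemma bdot0r n (x : bits n) : bdot x (bzero n) = false.
Proof. by rewrite /bdot big1 // => j _; rewrite ffunE andbF. Qed.

Lemma bxorK n (a : bits n) : involutive (bxor a).
Proof. by move=> b; apply/ffunP => j; rewrite !ffunE addbA addbb. Qed.

Lemma card_bits n : #|{: bits n}| = (2 ^ n)%N.
Proof. by rewrite card_ffun card_bool card_ord. Qed.

Lemma sum_sign (C : numClosedFieldType) n (t : bits n) :
  \sum_(x : bits n) (-1) ^+ bdot x t = if t == bzero n then (2 ^ n)%:R else 0 :> C.
Proof.
case: eqP => [->|/eqP nz].
  under eq_bigr do rewrite bdot0r expr0.
  by rewrite sumr_const card_bits.
have [j tj] : exists j, t j.
  apply/existsP; apply: contraR nz => /existsPn H.
  by apply/eqP/ffunP => j; rewrite ffunE; apply/negbTE/H.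
pose e : bits n := [ffun k => k == j].
have He : bdot e t = true.
  rewrite /bdot (bigD1 j) //= big1 ?ffunE ?eqxx ?tj // => k /negbTE kj.
  by rewrite ffunE kj.
set S := (\sum_x _).
have : S = - S.
  rewrite {1}/S (reindex_inj (can_inj (@bxorK _ e))) /= -sumrN.
  apply: eq_bigr => x _.
  by rewrite bdot_xorl He signr_addb expr1 mulN1r.
move/eqP; rewrite -subr_eq0 opprK -mulr2n mulrn_eq0 /=.
by move/eqP.
Qed.

Set Implicit Arguments. Unset Strict Implicit.

Definition proj n (s u : bits n) : bits n := [ffun j => u j && s j].

Lemma split_sum (C : numClosedFieldType) n (s : bits n) (F : bits n -> C) :
  \sum_u F u = \sum_(a | supp_in s a) \sum_(b | supp_in (bcomp s) b) F (bxor a b).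
Proof.
rewrite (partition_big (proj s) (supp_in s)) /=; last first.
  by move=> u _; apply/forallP => j; rewrite ffunE; case: (u j) (s j) => [] [].
apply: eq_bigr => a Ha.
rewrite (reindex_inj (can_inj (@bxorK _ a))) /=.
apply: eq_bigl => b.
apply/eqP/forallP => [H j | H].
  have := congr1 (fun f : bits n => f j) H; have := forallP Ha j; rewrite !ffunE.
  by case: (a j) (b j) (s j) => [] [] [].
apply/ffunP => j; have := forallP Ha j; have := H j; rewrite !ffunE.
by case: (a j) (b j) (s j) => [] [] [].
Qed.

Definition Qf (C : numClosedFieldType) n (psi : {ffun bits n -> C}) (s : bits n) : C :=
  \sum_u \sum_v psi u * psi v *
    (psi (swap_sub s u v).1 * psi (swap_sub s u v).2)^*.

Lemma Qf_purity (C : numClosedFieldType) n (psi : {ffun bits n -> C}) (s : bits n) :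
  Qf psi s = purity psi s.
Proof.
rewrite /Qf /purity /rho (split_sum s).
apply: eq_bigr => a Ha.
under eq_bigr => b Hb do rewrite (split_sum s).
rewrite exchange_big /=; apply: eq_bigr => a' Ha'.
rewrite mulr_suml; apply: eq_bigr => b Hb.
rewrite mulr_sumr; apply: eq_bigr => b' Hb'.
have E1 : (swap_sub s (bxor a b) (bxor a' b')).1 = bxor a' b.
  apply/ffunP => j; have := forallP Ha j; have := forallP Ha' j;
  have := forallP Hb j; have := forallP Hb' j; rewrite !ffunE.
  by case: (a j) (b j) (a' j) (b' j) (s j) => [] [] [] [] [].
have E2 : (swap_sub s (bxor a b) (bxor a' b')).2 = bxor a b'.
  apply/ffunP => j; have := forallP Ha j; have := forallP Ha' j;
  have := forallP Hb j; have := forallP Hb' j; rewrite !ffunE.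
  by case: (a j) (b j) (a' j) (b' j) (s j) => [] [] [] [] [].
move: E1 E2 => /= -> ->; rewrite rmorphM /=; ring.
Qed.


Lemma fourier_gen (C : numClosedFieldType) n (B : bits n -> bits n -> bits n -> C) (s : bits n) :
  \sum_x (-1) ^+ bdot s x *
    \sum_u \sum_v (\sum_g (-1) ^+ bdot x g * B g u v) * (\sum_g (-1) ^+ bdot x g * B g u v)^*
  = (2 ^ n)%:R * \sum_u \sum_v \sum_g B g u v * (B (bxor s g) u v)^*.
Proof.
transitivity (\sum_u \sum_v \sum_g \sum_g'
   (\sum_x (-1) ^+ bdot x (bxor s (bxor g g'))) * (B g u v * (B g' u v)^*)).
  transitivity (\sum_x \sum_u \sum_v \sum_g \sum_g'
     (-1) ^+ bdot x (bxor s (bxor g g')) * (B g u v * (B g' u v)^*)).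
    apply: eq_bigr => x _; rewrite mulr_sumr; apply: eq_bigr => u _.
    rewrite mulr_sumr; apply: eq_bigr => v _.
    rewrite rmorph_sum mulr_suml mulr_sumr; apply: eq_bigr => g _.
    rewrite mulr_sumr mulr_sumr; apply: eq_bigr => g' _.
    rewrite !bdot_xorr !signr_addb rmorphM rmorph_sign bdotC; ring.
  rewrite exchange_big; apply: eq_bigr => u _.
  rewrite exchange_big; apply: eq_bigr => v _.
  rewrite exchange_big; apply: eq_bigr => g _.
  rewrite exchange_big; apply: eq_bigr => g' _.
  by rewrite mulr_suml.
rewrite mulr_sumr; apply: eq_bigr => u _.
rewrite mulr_sumr; apply: eq_bigr => v _.
rewrite mulr_sumr; apply: eq_bigr => g _.
rewrite (bigD1 (bxor s g)) //= [X in _ + X]big1 ?addr0.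
  have -> : bxor s (bxor g (bxor s g)) = bzero n.
    by apply/ffunP => j; rewrite !ffunE; case: (s j) (g j) => [] [].
  by rewrite sum_sign eqxx.
move=> g' ne; rewrite sum_sign; case: eqP; last by rewrite mul0r.
move=> E; exfalso; move/eqP: ne; apply.
apply/ffunP => j; have := congr1 (fun f : bits n => f j) E; rewrite !ffunE.
by case: (s j) (g j) (g' j) => [] [] [].
Qed.


Lemma swap_invol n (g u v : bits n) :
  swap_sub g (swap_sub g u v).1 (swap_sub g u v).2 = (u, v).
Proof. by rewrite /swap_sub /=; congr pair; apply/ffunP => j; rewrite !ffunE; case: (g j). Qed.

Lemma swap_comp n (s g u v : bits n) :
  swap_sub (bxor s g) (swap_sub g u v).1 (swap_sub g u v).2 = swap_sub s u v.
Proof.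
rewrite /swap_sub /=; congr pair; apply/ffunP => j; rewrite !ffunE;
by case: (g j) (s j) => [] [].
Qed.

Section Main.
Variable C : numClosedFieldType.
Variable n : nat.
Variable psi : {ffun bits n -> C}.

Definition cc : C := (sqrtC (2 ^ n)%:R)^-1 * (sqrtC (2 ^ n)%:R)^-1.
Definition AA (g u v : bits n) : C := psi (swap_sub g u v).1 * psi (swap_sub g u v).2.

Lemma hc_final_E x u v :
  hc_final psi x u v = cc * \sum_g (-1) ^+ bdot x g * AA g u v.
Proof.
rewrite /hc_final /hadamard_n /cc -mulrA; congr (_ * _).
rewrite mulr_sumr; apply: eq_bigr => h _.
rewrite /ctrl_swap /AA mulrCA; congr (_ * _).
rewrite (bigD1 (bzero n)) //= [X in _ + X]big1 ?addr0.
  by rewrite /init_state eqxx bdot0r expr0 !mul1r.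
by move=> k /negbTE kn; rewrite /init_state kn !(mul0r, mulr0).
Qed.

Lemma cc_ge0 : 0 <= cc.
Proof. by rewrite /cc mulr_ge0 // invr_ge0 sqrtC_ge0 ler0n. Qed.

Lemma cc_val : cc * cc * (2 ^ n)%:R * (2 ^ n)%:R = 1.
Proof.
have N0 : (2 ^ n)%:R != 0 :> C by rewrite pnatr_eq0 expn_eq0.
have -> : cc = ((2 ^ n)%:R)^-1.
  by rewrite /cc -expr2 exprVn sqrtCK.
by rewrite divfK // mulVf.
Qed.

Lemma cc_val2 (x : C) : cc * cc * ((2 ^ n)%:R * ((2 ^ n)%:R * x)) = x.
Proof.
have N0 : (2 ^ n)%:R != 0 :> C by rewrite pnatr_eq0 expn_eq0.
have -> : cc = ((2 ^ n)%:R)^-1.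
  by rewrite /cc -expr2 exprVn sqrtCK.
by rewrite !mulrA divfK // mulVf // mul1r.
Qed.

Lemma key s : purity psi s = \sum_x (-1) ^+ bdot s x * p1 psi x.
Proof.
rewrite -Qf_purity.
transitivity (cc * cc * \sum_x (-1) ^+ bdot s x *
    \sum_u \sum_v (\sum_g (-1) ^+ bdot x g * AA g u v) * (\sum_g (-1) ^+ bdot x g * AA g u v)^*); last first.
  rewrite mulr_sumr; apply: eq_bigr => x _; rewrite mulrCA; congr (_ * _).
  rewrite /p1 mulr_sumr; apply: eq_bigr => u _.
  rewrite mulr_sumr; apply: eq_bigr => v _.
  rewrite normCK hc_final_E rmorphM /= (geC0_conj cc_ge0); ring.
rewrite fourier_gen.
have -> : \sum_u \sum_v \sum_g AA g u v * (AA (bxor s g) u v)^* = \sum_(g : bits n) Qf psi s.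
  rewrite pair_big /= exchange_big; apply: eq_bigr => g _.
  rewrite /Qf pair_big /=.
  pose h (p : bits n * bits n) := swap_sub g p.1 p.2.
  have hK : cancel h h by move=> [u v]; rewrite /h swap_invol.
  rewrite (reindex_inj (can_inj hK)) /=; apply: eq_bigr => [[u v]] _.
  by rewrite /h /AA swap_comp swap_invol.
rewrite sumr_const card_bits -[Qf psi s *+ _]mulr_natl.
by rewrite cc_val2.
Qed.

Lemma p1_ge0 x : 0 <= p1 psi x.
Proof. by rewrite /p1 sumr_ge0 // => u _; rewrite sumr_ge0 // => v _; rewrite exprn_ge0. Qed.

Lemma Qf01 s : is_pure_state psi -> (s = bzero n \/ s = bone n) -> purity psi s = 1.
Proof.
move=> Hp Hs; rewrite -Qf_purity /Qf.
have Hn : \sum_x psi x * (psi x)^* = 1.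
  by rewrite -Hp; apply: eq_bigr => x _; rewrite normCK.
transitivity ((\sum_u psi u * (psi u)^*) * (\sum_v psi v * (psi v)^*)); last by rewrite Hn mulr1.
rewrite mulr_suml; apply: eq_bigr => u _; rewrite mulr_sumr; apply: eq_bigr => v _.
case: Hs => ->.
  have -> : swap_sub (bzero n) u v = (u, v).
    by rewrite /swap_sub; congr pair; apply/ffunP => j; rewrite !ffunE.
  by rewrite /= rmorphM; ring.
have -> : swap_sub (bone n) u v = (v, u).
  by rewrite /swap_sub; congr pair; apply/ffunP => j; rewrite !ffunE.
by rewrite /= rmorphM; ring.
Qed.

Lemma charc s : is_pure_state psi ->
  (purity psi s = 1 <-> forall x, 0 < p1 psi x -> bdot s x = false).
Proof.
move=> Hp.
have Hsum : \sum_x p1 psi x = 1.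
  rewrite -(Qf01 (s := bzero n)) //; last by left.
  by rewrite key; apply: eq_bigr => x _; rewrite bdotC bdot0r mul1r.
have E : 1 - purity psi s = \sum_x (p1 psi x - (-1) ^+ bdot s x * p1 psi x).
  by rewrite key sumrB Hsum.
have Hw : forall x, 0 <= p1 psi x - (-1) ^+ bdot s x * p1 psi x.
  move=> x; case: (bdot s x); last by rewrite mul1r subrr.
  by rewrite expr1 mulN1r opprK addr_ge0 // p1_ge0.
split.
  move=> H1 x px; apply/negbTE/negP => bs.
  have Z : \sum_x (p1 psi x - (-1) ^+ bdot s x * p1 psi x) = 0 by rewrite -E H1 subrr.
  have := psumr_eq0P (fun x _ => Hw x) Z; move=> /(_ x isT).
  rewrite bs expr1 mulN1r opprK => /eqP; apply/negP.
  by rewrite gt_eqF // addr_gt0.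
move=> H; apply/eqP; rewrite -subr_eq0 -oppr_eq0 opprB E; apply/eqP.
apply: big1 => x _.
have := p1_ge0 x; rewrite le_eqVlt => /orP [/eqP <-|px].
  by rewrite mulr0 subrr.
by rewrite H // mul1r subrr.
Qed.

End Main.

Theorem mainTheorem5 (C : numClosedFieldType) (n : nat) (psi : {ffun bits n -> C}) :
  is_pure_state psi ->
  (* (i) H is a subgroup of ({0,1}^n, xor) containing 0 and 1 *)
  ([/\ bzero n \in Hgroup psi, bone n \in Hgroup psi &
      forall s t, s \in Hgroup psi -> t \in Hgroup psi -> bxor s t \in Hgroup psi])
  /\
  (* (ii) equivalence of (a), (b), (c) *)
  (forall s : bits n,
     (s \in Hgroup psi <-> (forall s' : bits n, purity psi (bxor s' s) = purity psi s'))
     /\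
     (s \in Hgroup psi <-> (forall x : bits n, 0 < p1 psi x -> bdot s x = false))).
Proof.
move=> Hp.
have memH s : (s \in Hgroup psi) <-> purity psi s = 1.
  by rewrite inE; split => [/eqP|->].
have HC s : s \in Hgroup psi <-> (forall x : bits n, 0 < p1 psi x -> bdot s x = false).
  by rewrite memH; apply: charc.
split; first split.
- by apply/memH/Qf01 => //; left.
- by apply/memH/Qf01 => //; right.
- move=> s t /HC Hs /HC Ht; apply/HC => x px.
  by rewrite bdot_xorl Hs // Ht.
move=> s; split => //; split.
  move=> /HC Hs s'; rewrite !key; apply: eq_bigr => x _.
  rewrite bdot_xorl signr_addb.
  have := p1_ge0 psi x; rewrite le_eqVlt => /orP [/eqP <-|px].
    by rewrite !mulr0.
  by rewrite Hs // mulr1.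
move=> H; apply/memH; have := H (bzero n).
have -> : bxor (bzero n) s = s by apply/ffunP => j; rewrite !ffunE.
move=> ->; by apply: Qf01 => //; left.
Qed.
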